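(* Let $\epsilon\ge0$ and let $U\in\mathscr P_+$ with $U^\theta\in\mathbb{SO}(k,K)$ for constants $0<k\le K<\infty$; let $J_t=\mathbb E[\int_t^\infty U_s^\theta ds\mid\mathcal F_t]$. If $\epsilon>0$, let $A,B>0$ be the positive solutions of $A=K^{-1}(A^\rho+\epsilon)$ and $B=k^{-1}(B^\rho+\epsilon)$; if $\epsilon=0$, set $A=K^{-\theta}$ and $B=k^{-\theta}$. Let $W$ be the unique fixed point of the operator $F^\epsilon_{U,U}$ for which there are constants $0<c_1\le c_2<\infty$ with $c_1J\le W\le c_2J$ (such a fixed point exists). Then $kA\,J\le W\le KB\,J$.
   Context: Work on a filtered probability space $(\Omega,\mathcal F,(\mathcal F_t)_{t\ge0},\mathbb P)$ with complete continuous filtration and trivial $\mathcal F_0$. $\mathscr P$ denotes progressively measurable processes, $\mathscr P_+$ (resp. $\mathscr P_{++}$) nonnegative (resp. strictly positive) ones. $\theta>1$ is fixed and $\rho=\frac{\theta-1}{\theta}$. For $X\in\mathscr P_+$, $J^X_t=\mathbb E[\int_t^\infty X_sds\mid\mathcal F_t]$. $\mathbb{SO}(k,K)$ is the set of $X\in\mathscr P_{++}$ with $\mathbb E\int_0^\infty X_tdt<\infty$ and $kJ^X\le X\le KJ^X$. For $U\in\mathscr P_+$, let $\mathbb I(h_{EZ},U)=\{W\in\mathscr P_+:\mathbb E\int_0^\infty U_sW_s^\rho ds<\infty\}$, and define $F^\epsilon_{U,U}:\mathbb I(h_{EZ},U)\to\mathscr P_+$ by $F^\epsilon_{U,U}(W)_t=\mathbb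 E[\int_t^\infty (U_sW_s^\rho+\epsilon U_s^\theta)ds\mid\mathcal F_t]$ (a càdlàg version being chosen). A fixed point is $W\in\mathbb I(h_{EZ},U)$ with $F^\epsilon_{U,U}(W)=W$. *)

(* Defs.v *)
From HB Require Import structures.
From mathcomp Require Import all_boot all_order all_algebra.
From mathcomp Require Import all_classical all_reals all_analysis.
Set Implicit Arguments. Unset Strict Implicit. Unset Printing Implicit Defensive.
Import Order.TTheory GRing.Theory Num.Theory.
Import numFieldNormedType.Exports.
Local Open Scope classical_set_scope.
Local Open Scope ring_scope.

Section Defs.
Context (R : realType) (d : measure_display) (Omega : measurableType d)
        (P : probability Omega R).

Definition rho (theta : R) : R := (theta - 1) / theta.

Definition std_filtration (F : R -> set (set Omega)) : Prop :=
  [/\ [/\ (forall t, 0 <= t -> sigma_algebra setT (F t)),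
      (forall t, 0 <= t -> F t `<=` measurable) &
      (forall s t, 0 <= s -> s <= t -> F s `<=` F t)],
      (forall N : set Omega,
          (exists M, [/\ measurable M, P M = 0%E & N `<=` M]) ->
          forall t, 0 <= t -> F t N),
      (forall t A, 0 <= t -> (forall s, t < s -> F s A) -> F t A),
      (forall t, 0 < t ->
          F t = <<s \bigcup_(s in [set s | 0 <= s < t]) F s >>) &
      (forall A, F 0 A -> P A = 0%E \/ P A = 1%E)].

Definition sub_meas (G : set (set Omega)) (Y : Omega -> R) : Prop :=
  forall B : set R, measurable B -> G (Y @^-1` B).

Definition is_cond_exp (G : set (set Omega)) (X : Omega -> \bar R)
  (Y : Omega -> R) : Prop :=
  [/\ sub_meas G Y,
      P.-integrable setT (EFin \o Y) &
      forall A, G A -> (\int[P]_(w in A) (Y w)%:E = \int[P]_(w in A) X w)%E].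

Definition progressive (F : R -> set (set Omega)) (X : R -> Omega -> R) : Prop :=
  forall t, 0 <= t -> forall B : set R, measurable B ->
    <<s [set A `*` C | A in [set A : set R | measurable A /\ A `<=` `[0, t]]
                     & C in F t] >>
      [set p : R * Omega | 0 <= p.1 <= t /\ B (X p.1 p.2)].

Definition nonneg_proc (X : R -> Omega -> R) : Prop :=
  forall t w, 0 <= t -> 0 <= X t w.
Definition pos_proc (X : R -> Omega -> R) : Prop :=
  forall t w, 0 <= t -> 0 < X t w.

Definition tail_int (X : R -> Omega -> R) (t : R) (w : Omega) : \bar R :=
  (\int[@lebesgue_measure R]_(s in `[t, +oo[) (X s w)%:E)%E.

Definition is_J (F : R -> set (set Omega)) (X JX : R -> Omega -> R) : Prop :=
  forall t, 0 <= t -> is_cond_exp (F t) (tail_int X t) (JX t).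

Definition proc_le (X Y : R -> Omega -> R) : Prop :=
  forall t, 0 <= t -> {ae P, forall w, X t w <= Y t w}.

Definition SO (F : R -> set (set Omega)) (k K : R) (X JX : R -> Omega -> R)
  : Prop :=
  [/\ [/\ progressive F X, pos_proc X &
      (\int[P]_w \int[@lebesgue_measure R]_(s in `[0%R, +oo[) (X s w)%:E < +oo)%E],
      is_J F X JX,
      proc_le (fun t w => k * JX t w) X &
      proc_le X (fun t w => K * JX t w)].

Definition in_I (F : R -> set (set Omega)) (theta : R) (U W : R -> Omega -> R)
  : Prop :=
  [/\ progressive F W, nonneg_proc W &
      (\int[P]_w \int[@lebesgue_measure R]_(s in `[0%R, +oo[)
           (U s w * W s w `^ rho theta)%:E < +oo)%E].

Definition cadlag (X : R -> Omega -> R) : Prop :=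
  forall w t, 0 <= t ->
    X s w @[s --> t^'+] --> X t w /\ (0 < t -> cvg (X s w @[s --> t^'-])).

Definition fixed_point (F : R -> set (set Omega)) (theta eps : R)
  (U W : R -> Omega -> R) : Prop :=
  [/\ in_I F theta U W, cadlag W &
      forall t, 0 <= t ->
        is_cond_exp (F t)
          (tail_int (fun s w => U s w * W s w `^ rho theta
                                + eps * U s w `^ theta) t) (W t)].
End Defs.

(* Main.v *)
Require Import Defs.
From HB Require Import structures.
From mathcomp Require Import all_boot all_order all_algebra.
From mathcomp Require Import all_classical all_reals all_analysis.
From mathcomp Require Import measurable_realfun.
From mathcomp Require Import lra.
Import Order.TTheory GRing.Theory Num.Theory.
Local Open Scope classical_set_scope.
Local Open Scope ring_scope.

Section Helpers.
Context (R : realType) (d : measure_display) (Omega : measurableType d)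
        (P : probability Omega R).

Lemma ce_le (G : set (set Omega)) (hG : sigma_algebra setT G)
  (hGm : G `<=` measurable) (Y1 Y2 : Omega -> R) :
  sub_meas G Y1 -> sub_meas G Y2 ->
  P.-integrable setT (EFin \o Y1) -> P.-integrable setT (EFin \o Y2) ->
  (forall A, G A -> (\int[P]_(w in A) (Y1 w)%:E <= \int[P]_(w in A) (Y2 w)%:E)%E) ->
  {ae P, forall w, Y1 w <= Y2 w}.
Proof.
move=> s1 s2 i1 i2 hle.
have gm (Y : Omega -> R) : sub_meas G Y ->
    @measurable_fun _ _ (g_sigma_algebraType G) R setT Y.
  move=> sY _ B mB; rewrite setTI.
  exact: sub_sigma_algebra (sY B mB).
have am (Y : Omega -> R) : sub_meas G Y -> measurable_fun setT Y.
  by move=> sY _ B mB; rewrite setTI; apply: hGm; exact: sY.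
set A := [set w | Y2 w < Y1 w].
have GA : G A.
  have := @measurable_fun_ltr _ (g_sigma_algebraType G) R setT Y2 Y1 (gm _ s2) (gm _ s1) measurableT [set true] I.
  have hs : forall S, <<s G >> S -> G S by move=> S; rewrite sigma_algebra_id.
  move=> /hs; rewrite setTI.
  by congr G; apply/seteqP; split => w /=.
have mA : measurable A := hGm _ GA.
have h0 : (\int[P]_(w in A) `|((Y1 w)%:E - (Y2 w)%:E)| = 0)%E.
  have -> : (\int[P]_(w in A) `|((Y1 w)%:E - (Y2 w)%:E)| =
             \int[P]_(w in A) ((Y1 w)%:E - (Y2 w)%:E))%E.
    apply: eq_integral => w; rewrite inE => Aw.
    by rewrite gee0_abs // -EFinB lee_fin subr_ge0 ltW.
  apply/eqP; rewrite eq_le; apply/andP; split.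
    rewrite integralB_EFin //; [|exact: (integrableS measurableT)|exact: (integrableS measurableT)].
    by rewrite sube_le0; exact: hle.
  by apply: integral_ge0 => w Aw; rewrite -EFinB lee_fin subr_ge0 ltW.
have mf : measurable_fun A (fun w => ((Y1 w)%:E - (Y2 w)%:E)%E).
  apply: (measurable_funS measurableT) => //.
  by apply: emeasurable_funB; apply/measurable_EFinP; apply: am.
have := (ae_eq_integral_abs P mA mf).1 h0.
apply: filterS => w hw; rewrite leNgt; apply/negP => Aw.
have := hw Aw; rewrite /= -EFinB => -[] /eqP; rewrite subr_eq0 => /eqP e.
by move: Aw; rewrite /A /= e ltxx.
Qed.


Lemma prog_meas (F : R -> set (set Omega)) (X : R -> Omega -> R)
  (hFm : forall t, 0 <= t -> F t `<=` measurable) : progressive F X ->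
  measurable_fun [set p : R * Omega | 0 <= p.1] (fun p => X p.1 p.2).
Proof.
move=> hX mD B mB.
have -> : [set p : R * Omega | 0 <= p.1] `&` (fun p => X p.1 p.2) @^-1` B =
  \bigcup_n [set p | 0 <= p.1 <= n%:R /\ B (X p.1 p.2)].
  apply/seteqP; split.
  - move=> [s w] /= [s0 Bx]; exists (Num.truncn s).+1 => //=.
    by split => //; rewrite s0 /= ltW // truncnS_gt.
  - by move=> [s w] [n _] /= [/andP[s0 _] Bx]; split.
apply: bigcupT_measurable => n.
have := hX n%:R (ler0n _ _) B mB.
apply: smallest_sub; first exact: sigma_algebra_measurable.
move=> _ [A [mA _] [C FC <-]]; apply: measurableX => //.
exact: (hFm n%:R (ler0n _ _)).
Qed.


Lemma tonelli_ae (t : R) (Dn : R -> Omega -> R) :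
  measurable_fun [set p : R * Omega | t <= p.1] (fun p => Dn p.1 p.2) ->
  (forall s w, t <= s -> 0 <= Dn s w) ->
  (forall s, t <= s -> {ae P, forall w, Dn s w = 0}) ->
  {ae P, forall w, (\int[@lebesgue_measure R]_(s in `[t, +oo[) (Dn s w)%:E = 0)%E}.
Proof.
move=> mD D0 Dae.
have mS : measurable [set p : R * Omega | t <= p.1].
  have -> : [set p : R * Omega | t <= p.1] = `[t, +oo[%classic `*` setT.
    by apply/seteqP; split => -[s w] /=; rewrite in_itv /= andbT //; case.
  exact: measurableX.
set f : R * Omega -> \bar R :=
  (fun p => (Dn p.1 p.2)%:E) \_ [set p : R * Omega | t <= p.1].
have mf : measurable_fun setT f.
  by apply/(measurable_restrictT _ mS); exact/measurable_EFinP.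
have f0 : forall x, (0 <= f x)%E.
  move=> [s w]; rewrite /f patchE; case: ifPn => // /set_mem /= ts.
  by rewrite lee_fin D0.
have key := fubini_tonelli (m1:=@lebesgue_measure R) (m2:=P) f mf f0.
have L0 : (\int[@lebesgue_measure R]_x \int[P]_y f (x, y) = 0)%E.
  apply: integral0_eq => s _.
  have [ts|st] := leP t s.
    rewrite (ae_eq_integral (cst 0%E)) //.
    - by rewrite integral0.
    - exact: measurable_fun_pair2.
    - apply: filterS (Dae s ts) => w hw _.
      by rewrite /f patchE mem_set //= hw.
  apply: integral0_eq => w _.
  by rewrite /f patchE memNset //=; apply/negP; rewrite -ltNge.
have mG := measurable_fun_fubini_tonelli_G (m1:=@lebesgue_measure R) f mf f0.
have G0 : (\int[P]_(y in setT) `|fubini_G (@lebesgue_measure R) f y| = 0)%E.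
  rewrite -L0 key; apply: eq_integral => y _.
  by rewrite gee0_abs //; apply: integral_ge0 => x _; exact: f0.
have := (ae_eq_integral_abs P measurableT mG).1 G0.
apply: filterS => w /(_ I) /= hw; apply: eq_trans hw.
rewrite /fubini_G [LHS]integral_mkcond; apply: eq_integral => s _.
rewrite /f !patchE; case: ifPn => [/set_mem|].
  by rewrite /= in_itv /= andbT => ts; rewrite mem_set.
move=> /negP hs; rewrite memNset //= => ts; apply: hs; apply/mem_set.
by rewrite /= in_itv /= ts.
Qed.

Definition jm (t : R) (X : R -> Omega -> R) :=
  measurable_fun [set p : R * Omega | t <= p.1] (fun p => X p.1 p.2).

Lemma mS_meas (t : R) : measurable [set p : R * Omega | t <= p.1].
Proof.
have -> : [set p : R * Omega | t <= p.1] = `[t, +oo[%classic `*` setT.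
  by apply/seteqP; split => -[s w] /=; rewrite in_itv /= andbT //; case.
exact: measurableX.
Qed.

Lemma patch_sect (t : R) (X : R -> Omega -> R) (w : Omega) :
  ((fun s => (X s w)%:E) \_ `[t, +oo[) =
  (fun s => (((fun p : R * Omega => (X p.1 p.2)%:E) \_ [set p : R * Omega | t <= p.1]) (s, w))).
Proof.
apply/funext => s; rewrite !patchE; case: ifPn => [/set_mem|].
  by rewrite /= in_itv /= andbT => ts; rewrite mem_set.
move=> /negP hs; rewrite memNset //= => ts; apply: hs; apply/mem_set.
by rewrite /= in_itv /= ts.
Qed.

Lemma section_meas (t : R) (X : R -> Omega -> R) : jm t X ->
  forall w, measurable_fun `[t, +oo[ (fun s => (X s w)%:E).
Proof.
move=> mX w; apply/(measurable_restrictT _ (measurable_itv _)).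
have h : measurable_fun setT (fun s => (((fun p : R * Omega => (X p.1 p.2)%:E) \_ [set p : R * Omega | t <= p.1]) (s, w))).
  apply: measurable_fun_pair1.
  by apply/(measurable_restrictT _ (mS_meas t)); exact/measurable_EFinP.
apply: eq_measurable_fun h => s _.
by have /(congr1 (fun h => h s)) := patch_sect t X w.
Qed.

Lemma tail_meas (t : R) (X : R -> Omega -> R) : jm t X ->
  (forall s w, t <= s -> 0 <= X s w) ->
  measurable_fun setT (tail_int X t).
Proof.
move=> mX X0.
set f := (fun p : R * Omega => (X p.1 p.2)%:E) \_ [set p : R * Omega | t <= p.1].
have mf : measurable_fun setT f.
  by apply/(measurable_restrictT _ (mS_meas t)); exact/measurable_EFinP.
have f0 : forall x, (0 <= f x)%E.
  move=> [s w]; rewrite /f patchE; case: ifPn => // /set_mem /= ts.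
  by rewrite lee_fin X0.
have := measurable_fun_fubini_tonelli_G (m1:=@lebesgue_measure R) f mf f0.
apply: eq_measurable_fun => w _.
rewrite /fubini_G /tail_int [RHS]integral_mkcond; apply: eq_integral => s _.
symmetry; by have /(congr1 (fun h => h s)) := patch_sect t X w.
Qed.

Lemma tail_cmp (t : R) (X1 X2 : R -> Omega -> R) : jm t X1 -> jm t X2 ->
  (forall s w, t <= s -> 0 <= X1 s w) -> (forall s w, t <= s -> 0 <= X2 s w) ->
  (forall s, t <= s -> {ae P, forall w, X1 s w <= X2 s w}) ->
  {ae P, forall w, (tail_int X1 t w <= tail_int X2 t w)%E}.
Proof.
move=> m1 m2 p1 p2 hle.
pose Dn := fun s w => Num.max 0 (X1 s w - X2 s w).
have mD : jm t Dn.
  rewrite /jm /Dn; apply: measurable_maxr; first exact: measurable_cst.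
  exact: measurable_funB.
have D0 : forall s w, t <= s -> 0 <= Dn s w.
  by move=> *; rewrite /Dn le_max lexx.
have Dae : forall s, t <= s -> {ae P, forall w, Dn s w = 0}.
  move=> s ts; apply: filterS (hle s ts) => w h; rewrite /Dn.
  by apply/max_idPl; rewrite subr_le0.
apply: filterS (@tonelli_ae t Dn mD D0 Dae) => w hw.
rewrite /tail_int.
apply: (@le_trans _ _ (\int[@lebesgue_measure R]_(s in `[t,+oo[) ((X2 s w)%:E + (Dn s w)%:E))%E).
  apply: ge0_le_integral => //.
  - by move=> s; rewrite /= in_itv /= andbT => ts; rewrite lee_fin p1.
  - exact: section_meas.
  - by apply: emeasurable_funD; exact: section_meas.
  - move=> s; rewrite /= in_itv /= andbT => ts; rewrite -EFinD lee_fin /Dn.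
    have : X1 s w - X2 s w <= Num.max 0 (X1 s w - X2 s w) by rewrite le_max lexx orbT.
    lra.
rewrite ge0_integralD //.
- by rewrite hw adde0.
- by move=> s; rewrite /= in_itv /= andbT => ts; rewrite lee_fin p2.
- exact: section_meas.
- by move=> s; rewrite /= in_itv /= andbT => ts; rewrite lee_fin D0.
- exact: section_meas.
Qed.

Lemma tail_ge0 (t : R) (X : R -> Omega -> R) :
  (forall s w, t <= s -> 0 <= X s w) -> forall w, (0 <= tail_int X t w)%E.
Proof.
move=> pX w; apply: integral_ge0 => s.
by rewrite /= in_itv /= andbT => ts; rewrite lee_fin pX.
Qed.

Lemma ce_cmp (G : set (set Omega)) (hG : sigma_algebra setT G)
  (hGm : G `<=` measurable) (t : R) (X1 X2 : R -> Omega -> R) (Y1 Y2 : Omega -> R) :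
  jm t X1 -> jm t X2 ->
  (forall s w, t <= s -> 0 <= X1 s w) -> (forall s w, t <= s -> 0 <= X2 s w) ->
  (forall s, t <= s -> {ae P, forall w, X1 s w <= X2 s w}) ->
  is_cond_exp P G (tail_int X1 t) Y1 -> is_cond_exp P G (tail_int X2 t) Y2 ->
  {ae P, forall w, Y1 w <= Y2 w}.
Proof.
move=> m1 m2 p1 p2 hle [s1 i1 e1] [s2 i2 e2].
apply: (@ce_le G hG hGm Y1 Y2 s1 s2 i1 i2) => A GA.
rewrite e1 // e2 //.
apply: ae_ge0_le_integral => //.
- exact: hGm.
- by move=> w _; apply: tail_ge0.
- by apply: (measurable_funS measurableT) => //; exact: tail_meas.
- by move=> w _; apply: tail_ge0.
- by apply: (measurable_funS measurableT) => //; exact: tail_meas.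
- by apply: filterS (@tail_cmp t X1 X2 m1 m2 p1 p2 hle) => w h _; exact: h.
Qed.

Lemma ce_scale (G : set (set Omega)) (hGm : G `<=` measurable) (t : R)
  (X : R -> Omega -> R) (Y : Omega -> R) (g : R) : 0 <= g -> jm t X ->
  (forall s w, t <= s -> 0 <= X s w) ->
  is_cond_exp P G (tail_int X t) Y ->
  is_cond_exp P G (tail_int (fun s w => g * X s w) t) (fun w => g * Y w).
Proof.
move=> g0 mX pX [sY iY eY]; split.
- move=> B mB.
  have mg : measurable_fun setT (fun x : R => g * x).
    by apply: measurable_funM; [exact: measurable_cst|exact: measurable_id].
  have := mg measurableT B mB; rewrite setTI => mB'.
  exact: (sY _ mB').
- have := integrableZl measurableT g iY.
  by apply: eq_integrable => // w _; rewrite /= EFinM.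
- move=> A GA.
  have mA := hGm _ GA.
  have -> : (\int[P]_(w in A) (g * Y w)%:E = g%:E * \int[P]_(w in A) (Y w)%:E)%E.
    by rewrite -integralZl //; exact: (integrableS measurableT).
  rewrite eY // -ge0_integralZl_EFin //.
  + apply: eq_integral => w _; rewrite /tail_int -ge0_integralZl_EFin //.
    * by move=> s; rewrite /= in_itv /= andbT => ts; rewrite lee_fin pX.
    * exact: section_meas.
  + by move=> w _; apply: tail_ge0.
  + by apply: (measurable_funS measurableT) => //; exact: tail_meas.
Qed.


Lemma powR_gt_self (x r : R) : 0 < x < 1 -> r < 1 -> x < x `^ r.
Proof.
move=> /andP[x0 x1] r1.
rewrite /powR gt_eqF //.
rewrite -[X in X < _](lnK (x:=x)); last by rewrite posrE.
rewrite ltr_expR.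
have := ln_lt0 (x:=x); rewrite x0 x1 => /(_ isT) l0.
nra.
Qed.

Lemma powR_lt_self (x r : R) : 1 < x -> r < 1 -> x `^ r < x.
Proof.
move=> x1 r1; have x0 : 0 < x by apply: lt_trans x1.
rewrite /powR gt_eqF //.
rewrite -[X in _ < X](lnK (x:=x)); last by rewrite posrE.
rewrite ltr_expR.
have l0 := ln_gt0 x1.
nra.
Qed.

Lemma fix_lo (K eps r a s : R) : 0 < K -> 0 <= eps -> r < 1 -> 0 < a ->
  (a / K) `^ r + eps = a -> 0 < s -> (s / K) `^ r + eps <= s -> a <= s.
Proof.
move=> K0 e0 r1 a0 ha s0 hs; rewrite leNgt; apply/negP => sa.
set l := s / a.
have l0 : 0 < l by rewrite divr_gt0.
have l1 : l < 1 by rewrite ltr_pdivrMr // mul1r.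
have hsl : s / K = l * (a / K) by rewrite /l mulrA divfK // gt_eqF.
have aK0 : 0 < (a / K) `^ r by rewrite powR_gt0 // divr_gt0.
have e1 : (s / K) `^ r = l `^ r * (a / K) `^ r.
  have aK : 0 <= a / K by rewrite divr_ge0 // ltW.
  by rewrite hsl powRM // ltW.
have lr : l < l `^ r by apply: powR_gt_self => //; rewrite l0 l1.
have : l * a = s by rewrite /l divfK // gt_eqF.
move: hs; rewrite e1 => hs hla.
have h1 : l * (a / K) `^ r < l `^ r * (a / K) `^ r by rewrite ltr_pM2r.
have h2 : l * eps <= eps by rewrite ler_piMl // ltW.
have h3 : l * a = l * (a / K) `^ r + l * eps by rewrite -{1}ha mulrDr.
lra.
Qed.

Lemma fix_hi (k eps r b i : R) : 0 < k -> 0 <= eps -> r < 1 -> 0 < b ->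
  (b / k) `^ r + eps = b -> 0 < i -> i <= (i / k) `^ r + eps -> i <= b.
Proof.
move=> k0 e0 r1 b0 hb i0 hi; rewrite leNgt; apply/negP => bi.
set l := i / b.
have l1 : 1 < l by rewrite ltr_pdivlMr // mul1r.
have l0 : 0 < l by apply: lt_trans l1.
have hsl : i / k = l * (b / k) by rewrite /l mulrA divfK // gt_eqF.
have bK0 : 0 < (b / k) `^ r by rewrite powR_gt0 // divr_gt0.
have e1 : (i / k) `^ r = l `^ r * (b / k) `^ r.
  have bK : 0 <= b / k by rewrite divr_ge0 // ltW.
  by rewrite hsl powRM // ltW.
have lr : l `^ r < l by apply: powR_lt_self.
have : l * b = i by rewrite /l divfK // gt_eqF.
move: hi; rewrite e1 => hi hla.
have h1 : l `^ r * (b / k) `^ r < l * (b / k) `^ r by rewrite ltr_pM2r.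
have h2 : eps <= l * eps by rewrite ler_peMl // ltW.
have h3 : l * b = l * (b / k) `^ r + l * eps by rewrite -{1}hb mulrDr.
lra.
Qed.

Lemma rho_ge0 (th : R) : 1 < th -> 0 <= rho th.
Proof.
move=> th1; rewrite /rho divr_ge0 // ?subr_ge0 ltW //.
exact: lt_trans th1.
Qed.

Lemma rho_lt1 (th : R) : 1 < th -> rho th < 1.
Proof.
move=> th1; have th0 : 0 < th by apply: lt_trans th1.
by rewrite /rho ltr_pdivrMr // mul1r ltrBlDr ltrDl.
Qed.

Lemma ident (th u a : R) : 1 < th -> 0 <= u -> 0 <= a ->
  u * (a * u `^ th) `^ rho th = a `^ rho th * u `^ th.
Proof.
move=> th1 u0 a0; have th0 : 0 < th by apply: lt_trans th1.
rewrite powRM ?powR_ge0 // -powRrM.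
have -> : th * rho th = th - 1 by rewrite /rho mulrC divfK // gt_eqF.
by rewrite mulrCA mulr_powRB1.
Qed.

Lemma real_lo (th eps c K u w j : R) : 1 < th -> 0 <= c -> 0 < K -> 0 <= u ->
  c * j <= w -> u `^ th <= K * j ->
  ((c / K) `^ rho th + eps) * u `^ th <= u * w `^ rho th + eps * u `^ th.
Proof.
move=> th1 c0 K0 u0 hw hj.
have cK : 0 <= c / K by rewrite divr_ge0 // ltW.
have h1 : c / K * u `^ th <= w.
  apply: le_trans hw; apply: le_trans (ler_wpM2l cK hj) _.
  by rewrite mulrA divfK // gt_eqF.
have h2 : (c / K * u `^ th) `^ rho th <= w `^ rho th.
  apply: ge0_ler_powR => //; first exact: rho_ge0.
    by rewrite nnegrE mulr_ge0 // powR_ge0.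
  by rewrite nnegrE; apply: le_trans h1; rewrite mulr_ge0 // powR_ge0.
have h3 := ler_wpM2l u0 h2.
rewrite ident // in h3.
by rewrite mulrDl lerD2r.
Qed.

Lemma real_hi (th eps c k u w j : R) : 1 < th -> 0 <= c -> 0 < k -> 0 <= u ->
  0 <= w -> w <= c * j -> k * j <= u `^ th ->
  u * w `^ rho th + eps * u `^ th <= ((c / k) `^ rho th + eps) * u `^ th.
Proof.
move=> th1 c0 k0 u0 w0 hw hj.
have ck : 0 <= c / k by rewrite divr_ge0 // ltW.
have h1 : w <= c / k * u `^ th.
  apply: le_trans hw _; apply: le_trans _ (ler_wpM2l ck hj).
  by rewrite mulrA divfK // gt_eqF.
have h2 : w `^ rho th <= (c / k * u `^ th) `^ rho th.
  apply: ge0_ler_powR => //; first exact: rho_ge0.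
  by rewrite nnegrE mulr_ge0 // powR_ge0.
have h3 := ler_wpM2l u0 h2.
rewrite ident // in h3.
by rewrite mulrDl lerD2r.
Qed.

Lemma ae2 {A B C : Omega -> Prop} : {ae P, forall w, A w} ->
  {ae P, forall w, B w} -> (forall w, A w -> B w -> C w) -> {ae P, forall w, C w}.
Proof. by move=> hA hB hC; apply: filterS2 hA hB. Qed.

Lemma ae_ex (Q : Omega -> Prop) : {ae P, forall w, Q w} -> exists w, Q w.
Proof.
move=> [N [mN PN0 sub]]; apply: contrapT => hn.
have : (P setT <= P N)%E.
  apply: le_measure; rewrite ?inE //.
  move=> w _; apply: sub => /= qw; apply: hn; exists w.
  exact: qw.
by rewrite probability_setT PN0 lee_fin ler10.
Qed.

Lemma lim_lo (s x y : R) : 0 <= x ->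
  (forall n : nat, (s - n.+1%:R^-1) * x <= y) -> s * x <= y.
Proof.
move=> x0 hn; rewrite leNgt; apply/negP => h.
set de := s * x - y.
have de0 : 0 < de by rewrite subr_gt0.
set n := Num.truncn (x / de).
have h1 : x / de < n.+1%:R by exact: truncnS_gt.
have h2 : x < n.+1%:R * de by rewrite -ltr_pdivrMr.
have h3 : n.+1%:R^-1 * x < de.
  by rewrite mulrC ltr_pdivrMr // mulrC.
have h4 := hn n; rewrite /de in h3.
set e := n.+1%:R^-1 in h3 h4; clearbody e; clear -h3 h4; nra.
Qed.

Lemma lim_hi (i x y : R) : 0 <= x ->
  (forall n : nat, y <= (i + n.+1%:R^-1) * x) -> y <= i * x.
Proof.
move=> x0 hn; rewrite leNgt; apply/negP => h.
set de := y - i * x.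
have de0 : 0 < de by rewrite subr_gt0.
set n := Num.truncn (x / de).
have h1 : x / de < n.+1%:R by exact: truncnS_gt.
have h2 : x < n.+1%:R * de by rewrite -ltr_pdivrMr.
have h3 : n.+1%:R^-1 * x < de.
  by rewrite mulrC ltr_pdivrMr // mulrC.
have h4 := hn n; rewrite /de in h3.
set e := n.+1%:R^-1 in h3 h4; clearbody e; clear -h3 h4; nra.
Qed.

Lemma fixA (th eps K A : R) : 1 < th -> 0 < K -> 0 <= eps ->
  (0 < eps -> 0 < A /\ A = K^-1 * (A `^ rho th + eps)) ->
  (eps = 0 -> A = K `^ (- th)) ->
  0 < A /\ ((K * A) / K) `^ rho th + eps = K * A.
Proof.
move=> th1 K0 e0 hA hA0.
have th0 : 0 < th by apply: lt_trans th1.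
have -> : K * A / K = A by rewrite mulrC mulKf // gt_eqF.
have [ep|] := ltP 0 eps.
  have [A0 eA] := hA ep; split => //.
  by rewrite {2}eA mulrA divff ?mul1r // gt_eqF.
move=> ep; have e0' : eps = 0 by apply/le_anti; rewrite ep e0.
have eA := hA0 e0'; rewrite e0' addr0; split.
  by rewrite eA powR_gt0.
rewrite eA -powRrM.
have -> : - th * rho th = 1 - th.
  by rewrite /rho mulNr mulrC divfK ?gt_eqF // opprB.
rewrite -{2}(powRr1 (ltW K0)) -powRD //.
by apply/implyP => _; rewrite gt_eqF.
Qed.

Lemma main_gen (F : R -> set (set Omega)) (hF : std_filtration P F)
  (theta : R) (htheta : 1 < theta) (eps : R) (heps : 0 <= eps)
  (U : R -> Omega -> R) (hUprog : progressive F U) (hUnn : nonneg_proc U)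
  (k K : R) (hk : 0 < k) (hkK : k <= K)
  (J : R -> Omega -> R)
  (hSO : SO P F k K (fun t w => U t w `^ theta) J)
  (A B : R)
  (hApos : 0 < eps -> 0 < A /\ A = K^-1 * (A `^ rho theta + eps))
  (hBpos : 0 < eps -> 0 < B /\ B = k^-1 * (B `^ rho theta + eps))
  (hA0 : eps = 0 -> A = K `^ (- theta))
  (hB0 : eps = 0 -> B = k `^ (- theta))
  (W : R -> Omega -> R) (hW : fixed_point P F theta eps U W)
  (c1 c2 : R) (hc1 : 0 < c1) (hc12 : c1 <= c2)
  (hWlo : proc_le P (fun t w => c1 * J t w) W)
  (hWhi : proc_le P W (fun t w => c2 * J t w)) :
  proc_le P (fun t w => k * A * J t w) W /\
  proc_le P W (fun t w => K * B * J t w).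
Proof.
case: hF => -[hFs hFm _] _ _ _ _.
case: hSO => -[progX posX _] isJ lowJ highJ.
case: hW => -[progW nnW _] _ ceW.
have th0 : 0 < theta by apply: lt_trans htheta.
have K0 : 0 < K by apply: lt_le_trans hkK.
have mjm (X : R -> Omega -> R) t : 0 <= t -> progressive F X -> jm t X.
  move=> t0 pX; apply: (measurable_funS (mS_meas 0)).
    by move=> [s w] /= ts; exact: le_trans ts.
  exact: (@prog_meas F X hFm pX).
have mU t : 0 <= t -> jm t U by move=> t0; exact: mjm.
have mW t : 0 <= t -> jm t W by move=> t0; exact: mjm.
have mUt t : 0 <= t -> jm t (fun s w => U s w `^ theta).
  by move=> t0; exact: (measurableT_comp (measurable_powR theta) (mU t t0)).
pose f := fun s w => U s w * W s w `^ rho theta + eps * U s w `^ theta.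
have mf t : 0 <= t -> jm t f.
  move=> t0; rewrite /jm /f; apply: measurable_funD.
  - apply: measurable_funM; first exact: mU.
    exact: (measurableT_comp (measurable_powR _) (mW t t0)).
  - apply: measurable_funM; first exact: measurable_cst.
    exact: mUt.
have f0 t : 0 <= t -> forall s w, t <= s -> 0 <= f s w.
  move=> t0 s w ts; rewrite /f addr_ge0 // mulr_ge0 // ?powR_ge0 //.
  by apply: hUnn; exact: le_trans ts.
have mg t g : 0 <= t -> jm t (fun s w => g * U s w `^ theta).
  by move=> t0; apply: measurable_funM; [exact: measurable_cst | exact: mUt].
have g0' g t : 0 <= g -> forall s w, t <= s -> 0 <= g * U s w `^ theta.
  by move=> g0 s w _; rewrite mulr_ge0 // powR_ge0.
have Jpos t : 0 <= t -> {ae P, forall w, 0 < J t w}.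
  move=> t0; apply: filterS (highJ t t0) => w h.
  by have := lt_le_trans (posX t w t0) h; rewrite pmulr_rgt0.
have Jge0 t : 0 <= t -> {ae P, forall w, 0 <= J t w}.
  by move=> t0; apply: filterS (Jpos t t0) => w /ltW.
have step_lo c : 0 <= c -> proc_le P (fun t w => c * J t w) W ->
    proc_le P (fun t w => ((c / K) `^ rho theta + eps) * J t w) W.
  move=> c0 hc t t0.
  have gg : 0 <= (c / K) `^ rho theta + eps by rewrite addr_ge0 // powR_ge0.
  apply: (@ce_cmp (F t) (hFs t t0) (hFm t t0) t
     (fun s w => ((c / K) `^ rho theta + eps) * U s w `^ theta) f
     (fun w => ((c / K) `^ rho theta + eps) * J t w) (W t)).
  - exact: mg.
  - exact: mf.
  - exact: g0'.
  - exact: f0.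
  - move=> s ts; have s0 := le_trans t0 ts.
    apply: (ae2 (hc s s0) (highJ s s0)) => w h1 h2.
    by apply: (real_lo theta eps c K (U s w) (W s w) (J s w)) => //; exact: (hUnn s w s0).
  - exact: (@ce_scale (F t) (hFm t t0) t (fun s w => U s w `^ theta) (J t) _ gg
      (mUt t t0) (fun s w _ => powR_ge0 _ _) (isJ t t0)).
  - exact: ceW.
have step_hi c : 0 <= c -> proc_le P W (fun t w => c * J t w) ->
    proc_le P W (fun t w => ((c / k) `^ rho theta + eps) * J t w).
  move=> c0 hc t t0.
  have gg : 0 <= (c / k) `^ rho theta + eps by rewrite addr_ge0 // powR_ge0.
  apply: (@ce_cmp (F t) (hFs t t0) (hFm t t0) t f
     (fun s w => ((c / k) `^ rho theta + eps) * U s w `^ theta)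
     (W t) (fun w => ((c / k) `^ rho theta + eps) * J t w)).
  - exact: mf.
  - exact: mg.
  - exact: f0.
  - exact: g0'.
  - move=> s ts; have s0 := le_trans t0 ts.
    apply: (ae2 (hc s s0) (lowJ s s0)) => w h1 h2.
    by apply: (real_hi theta eps c k (U s w) (W s w) (J s w)) => //; [exact: (hUnn s w s0) | exact: (nnW s w s0)].
  - exact: ceW.
  - exact: (@ce_scale (F t) (hFm t t0) t (fun s w => U s w `^ theta) (J t) _ gg
      (mUt t t0) (fun s w _ => powR_ge0 _ _) (isJ t t0)).
pose S := [set c | 0 <= c /\ proc_le P (fun t w => c * J t w) W].
have Sc1 : S c1 by split => //; exact: ltW.
have Sub c : S c -> c <= c2.
  move=> [c0 hc].
  have := ae2 (ae2 (hc 0 (lexx 0)) (hWhi 0 (lexx 0)) (fun w h1 h2 => conj h1 h2))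
    (Jpos 0 (lexx 0)) (fun w h1 h2 => conj h1 h2).
  move=> /ae_ex [w [[h1 h2] h3]].
  by rewrite -(ler_pM2r h3); apply: le_trans h2.
have hsup : has_sup S.
  by split; [exists c1 | exists c2 => c Sc; exact: Sub].
have c1s : c1 <= sup S := sup_upper_bound hsup Sc1.
have s0 : 0 < sup S := lt_le_trans hc1 c1s.
have Ss : S (sup S).
  split; first exact: ltW.
  move=> t t0.
  have hn : forall n : nat, {ae P, forall w, (sup S - n.+1%:R^-1) * J t w <= W t w}.
    move=> n.
    have en : 0 < n.+1%:R^-1 :> R by rewrite invr_gt0 ltr0Sn.
    have [r [r0 hr] lr] := @sup_adherent R S _ en hsup.
    apply: (ae2 (hr t t0) (Jge0 t t0)) => w h1 h2.
    by apply: le_trans h1; apply: ler_wpM2r => //; exact: ltW.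
  apply: (ae2 (ae_foralln hn) (Jge0 t t0)) => w h1 h2.
  exact: lim_lo.
have [_ hSs] := Ss.
have Sg : S ((sup S / K) `^ rho theta + eps).
  split; first by rewrite addr_ge0 // powR_ge0.
  exact: step_lo (ltW s0) hSs.
have gle := sup_upper_bound hsup Sg.
have [A0 hAfix] := @fixA theta eps K A htheta K0 heps hApos hA0.
have aKs : K * A <= sup S.
  apply: (@fix_lo K eps (rho theta) (K * A) (sup S) K0 heps (@rho_lt1 theta htheta) _ hAfix s0 gle).
  by rewrite mulr_gt0.
pose T := [set c | 0 <= c /\ proc_le P W (fun t w => c * J t w)].
have Tc2 : T c2 by split => //; apply: le_trans (ltW hc1) hc12.
have Tlb c : T c -> c1 <= c.
  move=> [c0 hc].
  have := ae2 (ae2 (hWlo 0 (lexx 0)) (hc 0 (lexx 0)) (fun w h1 h2 => conj h1 h2))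
    (Jpos 0 (lexx 0)) (fun w h1 h2 => conj h1 h2).
  move=> /ae_ex [w [[h1 h2] h3]].
  by rewrite -(ler_pM2r h3); apply: le_trans h2.
have hinf : has_inf T.
  by split; [exists c2 | exists c1 => c Tc; exact: Tlb].
have c1i : c1 <= inf T.
  by apply: lb_le_inf; [exists c2 | move=> c Tc; exact: Tlb].
have i0 : 0 < inf T := lt_le_trans hc1 c1i.
have Ti : T (inf T).
  split; first exact: ltW.
  move=> t t0.
  have hn : forall n : nat, {ae P, forall w, W t w <= (inf T + n.+1%:R^-1) * J t w}.
    move=> n.
    have en : 0 < n.+1%:R^-1 :> R by rewrite invr_gt0 ltr0Sn.
    have [r [r0 hr] lr] := @inf_adherent R T _ en hinf.
    apply: (ae2 (hr t t0) (Jge0 t t0)) => w h1 h2.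
    by apply: le_trans h1 _; apply: ler_wpM2r => //; exact: ltW.
  apply: (ae2 (ae_foralln hn) (Jge0 t t0)) => w h1 h2.
  exact: lim_hi.
have [_ hTi] := Ti.
have Tg : T ((inf T / k) `^ rho theta + eps).
  split; first by rewrite addr_ge0 // powR_ge0.
  exact: step_hi (ltW i0) hTi.
have gge : inf T <= (inf T / k) `^ rho theta + eps := ge_inf hinf.2 Tg.
have [B0 hBfix] := @fixA theta eps k B htheta hk heps hBpos hB0.
have ikB : inf T <= k * B.
  apply: (@fix_hi k eps (rho theta) (k * B) (inf T) hk heps (@rho_lt1 theta htheta) _ hBfix i0 gge).
  by rewrite mulr_gt0.
split.
- move=> t t0; apply: (ae2 (hSs t t0) (Jge0 t t0)) => w h1 h2.
  apply: le_trans h1; apply: ler_wpM2r => //.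
  by apply: le_trans aKs; rewrite ler_wpM2r // ltW.
- move=> t t0; apply: (ae2 (hTi t t0) (Jge0 t t0)) => w h1 h2.
  apply: le_trans h1 _; apply: ler_wpM2r => //.
  by apply: le_trans ikB _; rewrite ler_wpM2r // ltW.
Qed.

End Helpers.

Theorem corollary6p4 (R : realType) (d : measure_display)
  (Omega : measurableType d) (P : probability Omega R)
  (F : R -> set (set Omega)) (hF : std_filtration P F)
  (theta : R) (htheta : 1 < theta) (eps : R) (heps : 0 <= eps)
  (U : R -> Omega -> R) (hUprog : progressive F U) (hUnn : nonneg_proc U)
  (k K : R) (hk : 0 < k) (hkK : k <= K)
  (J : R -> Omega -> R)
  (hSO : SO P F k K (fun t w => U t w `^ theta) J)
  (A B : R)
  (hApos : 0 < eps -> 0 < A /\ A = K^-1 * (A `^ rho theta + eps))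
  (hBpos : 0 < eps -> 0 < B /\ B = k^-1 * (B `^ rho theta + eps))
  (hA0 : eps = 0 -> A = K `^ (- theta))
  (hB0 : eps = 0 -> B = k `^ (- theta))
  (W : R -> Omega -> R) (hW : fixed_point P F theta eps U W)
  (c1 c2 : R) (hc1 : 0 < c1) (hc12 : c1 <= c2)
  (hWlo : proc_le P (fun t w => c1 * J t w) W)
  (hWhi : proc_le P W (fun t w => c2 * J t w)) :
  proc_le P (fun t w => k * A * J t w) W /\
  proc_le P W (fun t w => K * B * J t w).
Proof.
exact: (@main_gen R d Omega P F hF theta htheta eps heps U hUprog hUnn k K hk hkK
  J hSO A B hApos hBpos hA0 hB0 W hW c1 c2 hc1 hc12 hWlo hWhi).
Qed.
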